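(* Let $n_x,n_y,n_z$ be pairwise relatively prime positive integers and let $K$ and $K'$ be Lissajous knots with frequencies $(n_x,n_y,n_z)$, $\phi_x=0$, and phase shift pairs $(\phi_y,\phi_z)$ and $(\phi_y',\phi_z')$ respectively. (1) Suppose $(\phi_y,\phi_z)$ and $(\phi_y',\phi_z')$ lie in two adjacent regions of the phase torus separated by a diagonal line $L$ given by $\phi_z=\frac{n_z}{n_y}\phi_y+l\frac{\pi}{n_y}$ ($l\in\mathbb{Z}$). Then the $xy$-diagrams of $K$ and $K'$ differ exactly by changing all Type I crossings with parameters $(k,j)$ such that $jn_z+l\equiv 0 \pmod{n_y}$, and the number of such crossings is $n_x-1$. (2) Suppose $(\phi_y,\phi_z)$ and $(\phi_y',\phi_z')$ lie in two adjacent regions of the phase torus separated by a horizontal line $L$ given by $\phi_z=l\frac{\pi}{n_x}$ ($l\in\mathbb{Z}$). Then the $xy$-diagrams of $K$ and $K'$ differ exactly by changing all Type II crossings with parameters $(k,j)$ such that $jn_z+l\equiv 0\pmod{n_x}$, and the number of such crossings is $n_y-1$.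
   Context: A Lissajous knot with frequencies $(n_x,n_y,n_z)$ (pairwise relatively prime integers) and phase shifts $(\phi_x,\phi_y,\phi_z)$ is the curve $K(t)=(\cos(n_xt+\phi_x),\cos(n_yt+\phi_y),\cos(n_zt+\phi_z))$, $0\le t\le2\pi$, when it is embedded. Take $\phi_x=0$. The phase torus is the torus of pairs $(\phi_y,\phi_z)\in[0,2\pi]\times[0,2\pi]$; the curve fails to be embedded exactly on the singular lines $\phi_z=\frac{n_z}{n_y}\phi_y+l\frac{\pi}{n_y}$, $\phi_z=l\frac{\pi}{n_x}$, $\phi_y=l\frac{\pi}{n_x}$ ($l\in\mathbb{Z}$), and the regions of the phase torus are the connected components of the complement of these lines. The crossings of the projection of $K$ to the $xy$-plane correspond to pairs of parameters $(t_1,t_2)$ of two types. Type I: for $1\le k\le n_x-1$ and integers $j$ with $1+\lfloor \frac{n_y}{n_x}k+\frac{\phi_y}{\pi}\rfloor\le j\le \lfloor 2n_y-\frac{n_y}{n_x}k+\frac{\phi_y}{\pi}\rfloor$, $(t_1,t_2)=\big((-\frac{k}{n_x}+\frac{j}{n_y})\pi-\frac{\phi_y}{n_y},(\frac{k}{n_x}+\frac{j}{n_y})\pi-\frac{\phi_y}{n_y}\big)$. Type II: for $1\le k\le n_y-1$ and integers $j$ with $1+\lfloor\frac{n_x}{n_y}k\rfloor\le j\le\lfloor 2n_x-\frac{n_x}{n_y}k\rfloor$, $(t_1,t_2)=\big((-\frac{k}{n_y}+\frac{j}{n_x})\pi,(\frac{k}{n_y}+\frac{j}{n_x})\pi\big)$.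 The pair $(k,j)$ is called the parameters of the crossing. ''Changing a crossing'' means switching which strand is over and which is under. *)

(* Defs.v *)
From HB Require Import structures.
From mathcomp Require Import all_boot all_order all_algebra.
From mathcomp Require Import all_classical all_reals all_analysis.
Set Implicit Arguments. Unset Strict Implicit. Unset Printing Implicit Defensive.
Import Order.TTheory GRing.Theory Num.Theory.
Import numFieldNormedType.Exports.
Local Open Scope classical_set_scope.
Local Open Scope ring_scope.

Section Lissajous.
Variable R : realType.

(* A point of the phase torus is a pair (phi_y, phi_z); phi_x = 0. *)
Definition in_torus (p : R * R) : Prop :=
  0 <= p.1 <= 2 * pi /\ 0 <= p.2 <= 2 * pi.

Definition diag_line (ny nz : nat) (l : int) : set (R * R) :=
  [set p | p.2 = nz%:R / ny%:R * p.1 + l%:~R * pi / ny%:R].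
Definition horiz_line (nx : nat) (l : int) : set (R * R) :=
  [set p | p.2 = l%:~R * pi / nx%:R].
Definition vert_line (nx : nat) (l : int) : set (R * R) :=
  [set p | p.1 = l%:~R * pi / nx%:R].

Definition singular (nx ny nz : nat) : set (R * R) :=
  [set p | exists l : int,
     diag_line ny nz l p \/ horiz_line nx l p \/ vert_line nx l p].

Definition same_region (S : set (R * R)) (p q : R * R) : Prop :=
  exists C : set (R * R), connected C /\ C `<=` ~` S /\ C p /\ C q.

Definition region (S : set (R * R)) (p : R * R) : set (R * R) :=
  [set q | same_region S p q].

(* p and q lie in two distinct regions (components of the complement of S)
   which are adjacent along the line L: both regions accumulate at a point m
   of L near which the singular set S consists of L only. *)
Definition adjacent_across (S L : set (R * R)) (p q : R * R) : Prop :=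
  ~ S p /\ ~ S q /\ ~ same_region S p q /\
  exists m : R * R, L m /\ (\forall x \near m, S x -> L x) /\
    closure (region S p) m /\ closure (region S q) m.

(* z-coordinate of the Lissajous curve with phase phi_z. *)
Definition lz (nz : nat) (phz t : R) : R := cos (nz%:R * t + phz).

Definition tI1 (nx ny : nat) (phy : R) (k : nat) (j : int) : R :=
  (- (k%:R / nx%:R) + j%:~R / ny%:R) * pi - phy / ny%:R.
Definition tI2 (nx ny : nat) (phy : R) (k : nat) (j : int) : R :=
  (k%:R / nx%:R + j%:~R / ny%:R) * pi - phy / ny%:R.
Definition validI (nx ny : nat) (phy : R) (k : nat) (j : int) : bool :=
  [&& (1 <= k)%N, (k <= nx - 1)%N,
      1 + Num.floor (ny%:R / nx%:R * k%:R + phy / pi) <= j &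
      j <= Num.floor (2 * ny%:R - ny%:R / nx%:R * k%:R + phy / pi)].
(* true iff the strand with parameter t1 is the over-strand *)
Definition overI (nx ny nz : nat) (phy phz : R) (k : nat) (j : int) : bool :=
  lz nz phz (tI2 nx ny phy k j) < lz nz phz (tI1 nx ny phy k j).

Definition tII1 (nx ny : nat) (k : nat) (j : int) : R :=
  (- (k%:R / ny%:R) + j%:~R / nx%:R) * pi.
Definition tII2 (nx ny : nat) (k : nat) (j : int) : R :=
  (k%:R / ny%:R + j%:~R / nx%:R) * pi.
Definition validII (nx ny : nat) (k : nat) (j : int) : bool :=
  [&& (1 <= k)%N, (k <= ny - 1)%N,
      1 + Num.floor (nx%:R / ny%:R * k%:R : R) <= j &
      j <= Num.floor (2 * nx%:R - nx%:R / ny%:R * k%:R : R)].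
Definition overII (nx ny nz : nat) (phz : R) (k : nat) (j : int) : bool :=
  lz nz phz (tII2 nx ny k j) < lz nz phz (tII1 nx ny k j).

End Lissajous.

(* Main.v *)
Require Import Defs.
From HB Require Import structures.
From mathcomp Require Import all_boot all_order all_algebra.
From mathcomp Require Import all_classical all_reals all_analysis.
From mathcomp Require Import zify ring lra.
Import Order.TTheory GRing.Theory Num.Theory.
Import numFieldNormedType.Exports.
Local Open Scope classical_set_scope.
Local Open Scope ring_scope.

Set Implicit Arguments. Unset Strict Implicit. Unset Printing Implicit Defensive.


Section Topo.
Variable R : realType.

Definition U (a b : R) (x : R * R) : R := (a * x.1 + b * x.2) / pi.

Lemma cont_U (a b c : R) : continuous (fun x : R * R => U a b x - c).
Proof.
move=> x; rewrite /U.
apply: cvgB; last exact: cvg_cst.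
apply: cvgMl.
apply: cvgD; apply: cvgMr.
  exact: cvg_fst.
exact: cvg_snd.
Qed.

Lemma cont_seg (p q : R * R) :
  continuous (fun t : R => (p.1 + t * (q.1 - p.1), p.2 + t * (q.2 - p.2))).
Proof.
move=> t.
have h1 : (p.1 + t * (q.1 - p.1)) @[t --> t] --> (p.1 + t * (q.1 - p.1)).
  apply: cvgD; first exact: cvg_cst. apply: cvgMl. exact: cvg_id.
have h2 : (p.2 + t * (q.2 - p.2)) @[t --> t] --> (p.2 + t * (q.2 - p.2)).
  apply: cvgD; first exact: cvg_cst. apply: cvgMl. exact: cvg_id.
exact: (cvg_pair h1 h2).
Qed.

Lemma conn_sign (C : set (R * R)) (f : R * R -> R) p y :
  continuous f -> connected C -> (forall x, C x -> f x != 0) ->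
  C p -> C y -> (0 < f p) = (0 < f y).
Proof.
move=> cf cC nz Cp Cy.
have /connected_intervalP iC := connected_continuous_connected cC (continuous_subspaceT cf).
have fp0 := nz _ Cp; have fy0 := nz _ Cy.
have H : forall u v, C u -> C v -> f u < 0 -> 0 < f v -> False.
  move=> u v Cu Cv hu hv.
  have [c Cc fc0] : (f @` C) 0.
    apply: (iC (f u) (f v)); [by exists u|by exists v|].
    by rewrite (ltW hu) (ltW hv).
  by move: (nz _ Cc); rewrite fc0 eqxx.
case: (ltrP 0 (f p)) => hp; case: (ltrP 0 (f y)) => hy //.
- by case: (H _ _ Cy Cp _ hp); rewrite lt_neqAle hy fy0.
- by case: (H _ _ Cp Cy _ hy); rewrite lt_neqAle hp fp0.
Qed.

Lemma side_lemma (S : set (R * R)) (p m : R * R) (f : R * R -> R) :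
  continuous f -> (forall x, f x = 0 -> S x) -> ~ S p ->
  closure (region S p) m -> f m != 0 -> (0 < f p) = (0 < f m).
Proof.
move=> cf fS nSp clm fm0.
have nzS : forall x, ~ S x -> f x != 0.
  by move=> x nSx; apply/eqP => /fS.
have hreg : forall y, region S p y -> (0 < f p) = (0 < f y).
  move=> y [C [cC [CS [Cp Cy]]]].
  apply: (conn_sign cf cC) => // x Cx; apply: nzS; exact: CS.
have nb : nbhs m (f @^-1` ball (f m) `|f m|).
  apply: cf; apply: nbhsx_ballx; by rewrite normr_gt0.
have [y [ry By]] := clm _ nb.
rewrite (hreg _ ry).
move: By; rewrite /preimage /ball /=.
have [hm|hm] : 0 < f m \/ f m < 0.
  by move: fm0; rewrite neq_lt => /orP [->|->]; [right|left].
- rewrite (gtr0_norm hm) => h.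
  have h2 := ler_norm (f m - f y).
  have h3 : 0 < f y by lra.
  by rewrite h3 hm.
- rewrite (ltr0_norm hm) => h.
  have h2 := ler_norm (f y - f m); rewrite distrC in h2.
  have h3 : f y < 0 by lra.
  by rewrite (lt_gtF h3) (lt_gtF hm).
Qed.

Lemma pi_neq0 : (pi : R) != 0.
Proof. by rewrite gt_eqF // pi_gt0. Qed.

Lemma near_dir (P : set (R * R)) (m : R * R) :
  (\forall x \near m, P x) ->
  forall a b : R, exists2 e : R, 0 < e & P (m.1 + e * a, m.2 + e * b).
Proof.
move=> /nbhs_ballP [e0 e00 H] a b.
have ha := normr_ge0 a; have hb := normr_ge0 b.
set d := 2 * (1 + `|a| + `|b|).
have d0 : 0 < d by rewrite /d; lra.
have e0' : 0 < e0 / d by rewrite divr_gt0.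
exists (e0 / d) => //.
have ed : e0 / d * d = e0 by rewrite divfK // gt_eqF.
rewrite /d in ed; move: e0' ed; set c := e0 / d => c0 ed.
apply: H; split => /=; rewrite /ball /=.
  rewrite opprD addrA subrr sub0r normrN normrM (gtr0_norm c0).
  nra.
rewrite opprD addrA subrr sub0r normrN normrM (gtr0_norm c0).
nra.
Qed.

Definition seg (p q : R * R) (t : R) : R * R :=
  (p.1 + t * (q.1 - p.1), p.2 + t * (q.2 - p.2)).

Lemma U_seg a b p q t : U a b (seg p q t) = (1 - t) * U a b p + t * U a b q.
Proof. rewrite /U /seg /=; have := pi_neq0; move: (pi : R) => P hP; by field. Qed.

Lemma seg_avoid a b (l : R) p q t :
  (l < U a b p) = (l < U a b q) -> U a b p != l -> U a b q != l ->
  0 <= t <= 1 -> U a b (seg p q t) != l.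
Proof.
rewrite U_seg => E np nq /andP [t0 t1].
have [hp|hp] : l < U a b p \/ U a b p < l.
  by move: np; rewrite neq_lt => /orP [->|->]; [right|left].
- have hq : l < U a b q by rewrite -E.
  apply/eqP => h.
  have h2 : 0 <= (1 - t) * (U a b p - l) by apply: mulr_ge0; lra.
  have h3 : 0 <= t * (U a b q - l) by apply: mulr_ge0; lra.
  move: t0; rewrite le_eqVlt => /orP [/eqP t0|t0].
    by rewrite -t0 in h; lra.
  have h4 : 0 < t * (U a b q - l) by apply: mulr_gt0; lra.
  lra.
- have hq : U a b q < l.
    rewrite lt_neqAle nq /=; rewrite leNgt -E; exact/negbT/lt_gtF.
  apply/eqP => h.
  have h2 : 0 <= (1 - t) * (l - U a b p) by apply: mulr_ge0; lra.
  move: t0; rewrite le_eqVlt => /orP [/eqP t0|t0].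
    by rewrite -t0 in h; lra.
  have h4 : 0 < t * (l - U a b q) by apply: mulr_gt0; lra.
  lra.
Qed.

Lemma seg_conn p q : connected (seg p q @` `[0, 1]).
Proof.
apply: connected_continuous_connected; first exact: segment_connected.
apply: continuous_subspaceT; exact: cont_seg.
Qed.

Lemma seg0 p q : seg p q 0 = p.
Proof. by case: p => a b; rewrite /seg /= !mul0r !addr0. Qed.
Lemma seg1 p q : seg p q 1 = q.
Proof. by case: p; case: q => a b c d; rewrite /seg /= !mul1r !subrKC. Qed.

Lemma adj_m S L p q : adjacent_across S L p q ->
  exists m, L m /\ (\forall x \near m, S x -> L x) /\
   forall a b (l : R), (forall x, U a b x = l -> S x) -> U a b m != l ->
     (l < U a b p) = (l < U a b q).
Proof.
move=> [nSp [nSq [nsr [m [Lm [nm [clp clq]]]]]]].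
exists m; split => //; split => // a b l hS hm.
have cf := @cont_U a b l.
have fS : forall x, U a b x - l = 0 -> S x by move=> x /eqP; rewrite subr_eq0 => /eqP /hS.
have hm' : U a b m - l != 0 by rewrite subr_eq0.
have e1 := side_lemma cf fS nSp clp hm'.
have e2 := side_lemma cf fS nSq clq hm'.
by rewrite -subr_gt0 e1 -e2 subr_gt0.
Qed.

End Topo.

Section Lines.
Variable R : realType.
Variables nx ny nz : nat.
Hypothesis nx0 : (0 < nx)%N.
Hypothesis ny0 : (0 < ny)%N.

Let nxR : (nx%:R : R) != 0. Proof. by rewrite pnatr_eq0 -lt0n. Qed.
Let nyR : (ny%:R : R) != 0. Proof. by rewrite pnatr_eq0 -lt0n. Qed.

Definition Ud := U (- (nz%:R : R)) ny%:R.
Definition Uh := U (0 : R) nx%:R.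
Definition Uv := U (nx%:R : R) 0.

Lemma diag_lineE (l : int) (x : R * R) : diag_line ny nz l x <-> Ud x = l%:~R.
Proof.
rewrite /diag_line /Ud /U /=; have := @pi_neq0 R; move: (pi : R) => P hP.
split => [->|<-]; field; by rewrite hP nyR.
Qed.

Lemma horiz_lineE (l : int) (x : R * R) : horiz_line nx l x <-> Uh x = l%:~R.
Proof.
rewrite /horiz_line /Uh /U /=; have := @pi_neq0 R; move: (pi : R) => P hP.
split => [->|<-]; field; by rewrite ?hP ?nxR.
Qed.

Lemma vert_lineE (l : int) (x : R * R) : vert_line nx l x <-> Uv x = l%:~R.
Proof.
rewrite /vert_line /Uv /U /=; have := @pi_neq0 R; move: (pi : R) => P hP.
split => [->|<-]; field; by rewrite ?hP ?nxR.
Qed.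

Lemma singularE x : singular nx ny nz x <->
  exists l : int, Ud x = l%:~R \/ Uh x = l%:~R \/ Uv x = l%:~R.
Proof.
split => [[l H]|[l H]]; exists l.
  by case: H => [/diag_lineE|[/horiz_lineE|/vert_lineE]]; auto.
by case: H => [/diag_lineE|[/horiz_lineE|/vert_lineE]]; auto.
Qed.

Let S := @singular R nx ny nz.

Lemma notS x (l : int) : ~ S x ->
  [/\ Ud x != l%:~R, Uh x != l%:~R & Uv x != l%:~R].
Proof.
move=> nS; split; apply/eqP => h; apply: nS; apply/singularE; exists l; auto.
Qed.

Lemma sep p q : ~ S p -> ~ S q -> ~ same_region S p q ->
  exists l : int, (l%:~R < Ud p) != (l%:~R < Ud q) \/
    (l%:~R < Uh p) != (l%:~R < Uh q) \/ (l%:~R < Uv p) != (l%:~R < Uv q).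
Proof.
move=> nSp nSq nsr.
have [//|H] := pselect (exists l : int, (l%:~R < Ud p) != (l%:~R < Ud q) \/
    (l%:~R < Uh p) != (l%:~R < Uh q) \/ (l%:~R < Uv p) != (l%:~R < Uv q)).
exfalso; apply: nsr.
have H' : forall l : int, [/\ (l%:~R < Ud p) = (l%:~R < Ud q),
    (l%:~R < Uh p) = (l%:~R < Uh q) & (l%:~R < Uv p) = (l%:~R < Uv q)].
  move=> l; split; apply/eqP/negP => h; apply: H; exists l.
  - by left; apply/negP.
  - by right; left; apply/negP.
  - by right; right; apply/negP.
exists (seg p q @` `[0, 1]); split; first exact: seg_conn.
split; last first.
  split; [exists 0|exists 1]; rewrite ?seg0 ?seg1 //= in_itv /= ?lexx ?ler01 //.
move=> x [t t01 <-] /singularE [l hl].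
have [dp hp vp] := notS l nSp; have [dq hq vq] := notS l nSq.
have [ed eh ev] := H' l.
have t01' : 0 <= t <= 1 by move: t01; rewrite /= in_itv.
case: hl => [/eqP|[/eqP|/eqP]]; apply/negP.
- exact: seg_avoid.
- exact: seg_avoid.
- exact: seg_avoid.
Qed.

End Lines.

Section Floors.
Variable R : realType.

Definition nonint (x : R) := forall m : int, x != m%:~R.

Lemma same_floor (u v : R) :
  (forall l : int, (l%:~R < u) = (l%:~R < v)) -> nonint u -> nonint v ->
  Num.floor u = Num.floor v.
Proof.
move=> E nu nv; apply/esym/floor_def.
have /andP [h1 h2] := floor_itv u.
have h1' : (Num.floor u)%:~R < u by rewrite lt_neqAle h1 andbT eq_sym nu.
rewrite E in h1'.
have h2' : ~~ ((Num.floor u + 1)%:~R < v).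
  by rewrite -E -leNgt ltW.
apply/andP; split; first exact: ltW.
by rewrite lt_neqAle nv /= leNgt.
Qed.

Lemma adj_floor (u v : R) (l : int) :
  (forall l' : int, l' != l -> (l'%:~R < u) = (l'%:~R < v)) ->
  (l%:~R < u) != (l%:~R < v) -> nonint u -> nonint v ->
  (Num.floor u = l - 1 /\ Num.floor v = l) \/
  (Num.floor u = l /\ Num.floor v = l - 1).
Proof.
move=> E ne nu nv.
have Em : (l - 1)%:~R < u = ((l - 1)%:~R < v) by apply: E; lia.
have Ep : (l + 1)%:~R < u = ((l + 1)%:~R < v) by apply: E; lia.
have fl : forall w : R, nonint w -> (l - 1)%:~R < w -> w < l%:~R -> Num.floor w = l - 1.
  move=> w nw h1 h2; apply: floor_def; apply/andP; split; first exact: ltW.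
  by rewrite subrK.
have fh : forall w : R, nonint w -> l%:~R < w -> w < (l + 1)%:~R -> Num.floor w = l.
  move=> w nw h1 h2; apply: floor_def; apply/andP; split => //; exact: ltW.
have ltnn : forall w : R, nonint w -> forall k : int, (w < k%:~R) = ~~ (k%:~R < w).
  move=> w nw k; rewrite ltNge le_eqVlt negb_or eq_sym (nw k) //.
case hu: (l%:~R < u); rewrite hu in ne; move: ne; case hv: (l%:~R < v) => // _.
- right; split.
  + apply: fh => //; rewrite ltnn // Ep.
    apply/negP => h; move: hv; rewrite (lt_trans _ h) //; rewrite ltr_int; lia.
  + apply: fl => //; first by rewrite -Em (lt_trans _ hu) // ltr_int; lia.
    by rewrite ltnn // hv.
- left; split.
  + apply: fl => //; first by rewrite Em (lt_trans _ hv) // ltr_int; lia.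
    by rewrite ltnn // hu.
  + apply: fh => //; rewrite ltnn // -Ep.
    apply/negP => h; move: hu; rewrite (lt_trans _ h) //; rewrite ltr_int; lia.
Qed.


Lemma nested_floor (a : int) (n : nat) (u : R) : (0 < n)%N ->
  Num.floor ((a%:~R + u) / n%:R) = Num.floor ((a%:~R + (Num.floor u)%:~R) / n%:R : R).
Proof.
move=> n0; have nR : (0 : R) < n%:R by rewrite ltr0n.
set F := Num.floor u.
set K := Num.floor ((a%:~R + F%:~R) / n%:R).
apply: floor_def.
have /andP [k1 k2] := floor_itv ((a%:~R + F%:~R) / n%:R : R).
have /andP [f1 f2] := floor_itv u.
rewrite -/F -/K in k1 k2 f1 f2.
rewrite ler_pdivlMr // in k1; rewrite ltr_pdivrMr // in k2.
have k2i : (a + F < (K + 1) * n%:Z)%R.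
  by rewrite -(ltr_int R) intrD intrM.
have k2i' : (a + F + 1 <= (K + 1) * n%:Z)%R by lia.
have k2r : (a%:~R + F%:~R + 1 : R) <= (K + 1)%:~R * n%:R.
  move: k2i'; rewrite -(ler_int R) !intrD !intrM -!pmulrn => h; lra.
rewrite intrD in f2.
apply/andP; split.
  rewrite ler_pdivlMr //; lra.
rewrite ltr_pdivrMr //; lra.
Qed.

Lemma floor_divI (M : int) (n : nat) : (0 < n)%N ->
  let K := Num.floor (M%:~R / n%:R : R) in
  (K * n%:Z <= M)%R /\ (M < (K + 1) * n%:Z)%R.
Proof.
move=> n0 K; have nR : (0 : R) < n%:R by rewrite ltr0n.
have /andP [k1 k2] := floor_itv (M%:~R / n%:R : R).
rewrite -/K ler_pdivlMr // in k1; rewrite ltr_pdivrMr // in k2.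
split.
  by rewrite -(ler_int R) intrM.
by rewrite -(ltr_int R) intrM.
Qed.

Lemma nonint_shift (a : int) (n : nat) (u : R) : (0 < n)%N -> nonint u ->
  nonint ((a%:~R + u) / n%:R).
Proof.
move=> n0 nu m; apply/eqP => h.
have nR : (n%:R : R) != 0 by rewrite pnatr_eq0 -lt0n.
have : u = (m * n%:Z - a)%:~R.
  rewrite intrB intrM -h; field => //.
by move/eqP; rewrite (negbTE (nu _)).
Qed.


Lemma sin_Kpi (r : R) (K : int) :
  sin (r + K%:~R * pi) = (-1) ^+ `|K|%N * sin r.
Proof.
case: K => n.
  by rewrite /= -pmulrn mulr_natl (alternatingn (@sinDpi R)).
rewrite NegzE abszN absz_nat.
have := alternatingn (@sinDpi R) n.+1 (r + (- n.+1%:Z)%:~R * pi).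
rewrite -addrA intrN mulNr -pmulrn mulr_natl addNr addr0 => ->.
by rewrite mulrA -exprD -signr_odd oddD addbb expr0 mul1r.
Qed.

Lemma sin_floor (x : R) : nonint (x / pi) ->
  sin x != 0 /\ (0 < sin x) = (2 %| Num.floor (x / pi))%Z.
Proof.
move=> nx.
have p0 := @pi_gt0 R.
set K := Num.floor (x / pi).
have /andP [k1 k2] := floor_itv (x / pi).
rewrite -/K ler_pdivlMr // in k1; rewrite ltr_pdivrMr // in k2.
have kne : K%:~R * pi != x.
  apply/eqP => h; move: (nx K); rewrite -h mulfK ?eqxx //; exact: pi_neq0.
set r := x - K%:~R * pi.
have r0 : 0 < r by rewrite /r subr_gt0 lt_neqAle kne.
have rpi : r < pi by rewrite /r; move: k2; rewrite intrD mulrDl mul1r => h; lra.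
have sr : 0 < sin r by apply: sin_gt0_pi; rewrite r0 rpi.
have -> : x = r + K%:~R * pi by rewrite /r subrK.
rewrite sin_Kpi dvdzE /= dvdn2 -signr_odd.
case: (odd `|K|%N) => /=.
  rewrite expr1 mulN1r oppr_gt0 oppr_eq0 (gt_eqF sr); split => //.
  by rewrite ltNge (ltW sr).
by rewrite expr0 mul1r (gt_eqF sr) sr.
Qed.

End Floors.

Lemma int_sep (Kp Kq M n : int) : 0 < n ->
  Kp * n <= M - 1 -> M - 1 < (Kp + 1) * n ->
  Kq * n <= M -> M < (Kq + 1) * n ->
  ((2 %| Kp)%Z != (2 %| Kq)%Z) = (n %| M)%Z.
Proof.
move=> n0 h1 h2 h3 h4.
have a1 : Kp < Kq + 1.
  by rewrite -(ltr_pM2r n0); lia.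
have a2 : Kq <= Kp + 1.
  by rewrite -(ler_pM2r n0); lia.
have [e|e] : Kq = Kp \/ Kq = Kp + 1 by lia.
  rewrite e eqxx; apply/esym/negP => /dvdzP [c hc].
  have b1 : Kp < c by rewrite -(ltr_pM2r n0); lia.
  have b2 : c < Kp + 1 by rewrite -(ltr_pM2r n0); lia.
  lia.
rewrite e; have -> : (n %| M)%Z.
  apply/dvdzP; exists Kq; rewrite e; lia.
lia.
Qed.

Section Expr.
Variable R : realType.

Lemma cos_lt_sin (A B th de : R) : A = th - de -> B = th + de ->
  (cos B < cos A) = (0 < sin th * sin de).
Proof.
move=> -> ->; rewrite cosD cosB -subr_gt0.
have -> : cos th * cos de + sin th * sin de - (cos th * cos de - sin th * sin de)
  = 2 * (sin th * sin de) by ring.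
by rewrite pmulr_rgt0.
Qed.

Lemma sign_mul_ne (a b c : R) : a != 0 -> b != 0 -> c != 0 ->
  ((0 < a * c) != (0 < b * c)) = ((0 < a) != (0 < b)).
Proof.
move=> a0 b0 c0.
have [hc|hc] : 0 < c \/ c < 0.
  by move: c0; rewrite neq_lt => /orP [->|->]; [right|left].
  by rewrite !pmulr_lgt0.
rewrite !nmulr_lgt0 //.
have sg : forall x : R, x != 0 -> (x < 0) = ~~ (0 < x).
  by move=> x x0; rewrite ltNge le_eqVlt negb_or eq_sym x0.
by rewrite (sg _ a0) (sg _ b0) (inj_eq negb_inj).
Qed.

Lemma sign_mul_eq (a b c : R) : a != 0 -> b != 0 -> c != 0 ->
  (0 < a) = (0 < b) -> (0 < a * c) = (0 < b * c).
Proof.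
move=> a0 b0 c0 e.
by have := sign_mul_ne a0 b0 c0; rewrite e eqxx => /negbFE/eqP.
Qed.

Lemma delta_nonint (N m k : nat) : (0 < N)%N -> coprime N m -> (0 < k)%N -> (k < N)%N ->
  nonint ((m * k)%:R / N%:R : R).
Proof.
move=> N0 cop k0 kN z; apply/eqP => h.
have NR : (N%:R : R) != 0 by rewrite pnatr_eq0 -lt0n.
have h2 : ((m * k)%:Z%:~R : R) = (z * N%:Z)%:~R.
  by rewrite intrM -!pmulrn -h divfK.
have /intr_inj h3 := h2.
have : (N %| m * k)%N.
  have : (N%:Z %| (m * k)%:Z)%Z by rewrite h3 dvdz_mull.
  by rewrite dvdzE.
rewrite Gauss_dvdr // => /(dvdn_leq k0); lia.
Qed.

Variables nx ny nz : nat.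
Hypothesis nx0 : (0 < nx)%N.
Hypothesis ny0 : (0 < ny)%N.

Let nxR : (nx%:R : R) != 0. Proof. by rewrite pnatr_eq0 -lt0n. Qed.
Let nyR : (ny%:R : R) != 0. Proof. by rewrite pnatr_eq0 -lt0n. Qed.

Lemma overI_E (p : R * R) k j : overI nx ny nz p.1 p.2 k j =
  (0 < sin (((nz%:Z * j)%:~R + Ud ny nz p) / ny%:R * pi) *
       sin ((nz * k)%:R / nx%:R * pi)).
Proof.
rewrite /overI /lz; apply: cos_lt_sin;
  rewrite /tI1 /tI2 /Ud /U /= intrM -!pmulrn natrM;
  have := @pi_neq0 R; move: (pi : R) => P hP;
  move: nxR nyR; move: (nx%:R : R) (ny%:R : R) (nz%:R : R) (k%:R : R) (j%:~R : R) => X Y Z K J hX hY;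
  field; by rewrite ?hP ?hX ?hY.
Qed.

Lemma overII_E (p : R * R) k j : overII nx ny nz p.2 k j =
  (0 < sin (((nz%:Z * j)%:~R + Uh nx p) / nx%:R * pi) *
       sin ((nz * k)%:R / ny%:R * pi)).
Proof.
rewrite /overII /lz; apply: cos_lt_sin;
  rewrite /tII1 /tII2 /Uh /U /= intrM -!pmulrn natrM;
  have := @pi_neq0 R; move: (pi : R) => P hP;
  move: nxR nyR; move: (nx%:R : R) (ny%:R : R) (nz%:R : R) (k%:R : R) (j%:~R : R) => X Y Z K J hX hY;
  field; by rewrite ?hP ?hX ?hY.
Qed.

Lemma validI_same (p q : R * R) k j :
  Num.floor (Uv nx p) = Num.floor (Uv nx q) ->
  validI nx ny p.1 k j = validI nx ny q.1 k j.
Proof.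
move=> e.
have f1 : forall x : R * R, ny%:R / nx%:R * k%:R + x.1 / pi =
    (((ny * k)%:Z)%:~R + Uv nx x) / nx%:R.
  move=> x; rewrite /Uv /U -pmulrn natrM.
  have := @pi_neq0 R; move: (pi : R) => P hP;
  move: nxR; move: (nx%:R : R) (ny%:R : R) (k%:R : R) => X Y K hX.
  field; by rewrite ?hP ?hX.
have f2 : forall x : R * R, 2 * ny%:R - ny%:R / nx%:R * k%:R + x.1 / pi =
    (((2 * ny * nx)%:Z - (ny * k)%:Z)%:~R + Uv nx x) / nx%:R.
  move=> x; rewrite /Uv /U intrB -!pmulrn !natrM.
  have := @pi_neq0 R; move: (pi : R) => P hP;
  move: nxR; move: (nx%:R : R) (ny%:R : R) (k%:R : R) => X Y K hX.
  field; by rewrite ?hP ?hX.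
rewrite /validI (f1 p) (f1 q) (f2 p) (f2 q).
rewrite (nested_floor _ (Uv nx p) nx0) (nested_floor _ (Uv nx q) nx0).
rewrite (nested_floor _ (Uv nx p) nx0) (nested_floor _ (Uv nx q) nx0) e.
done.
Qed.

Lemma U_dir (a b : R) (m : R * R) (e al be : R) :
  U a b (m.1 + e * al, m.2 + e * be) = U a b m + e * (a * al + b * be) / pi.
Proof.
rewrite /U /=; have := @pi_neq0 R; move: (pi : R) => P hP; field; by rewrite hP.
Qed.

Lemma off_line (S L : set (R * R)) (m : R * R) (a b c d al be l l' : R) :
  (\forall x \near m, S x -> L x) -> (forall x, U a b x = l' -> S x) ->
  (forall x, L x -> U c d x = l) -> U c d m = l ->
  a * al + b * be = 0 -> c * al + d * be != 0 -> U a b m != l'.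
Proof.
move=> nm hS hL hm h0 h1; apply/eqP => hab.
have [e e0 He] := near_dir nm al be.
have hx : U a b (m.1 + e * al, m.2 + e * be) = l' by rewrite U_dir h0 mulr0 mul0r addr0.
have := hL _ (He (hS _ hx)); rewrite U_dir hm => h.
have /eqP : e * (c * al + d * be) / pi = 0 by lra.
rewrite mulf_eq0 invr_eq0 (negbTE (@pi_neq0 R)) orbF.
by rewrite mulf_eq0 (gt_eqF e0) (negbTE h1).
Qed.

End Expr.

Section Count.
Variable M : nat.
Hypothesis M0 : (0 < M)%N.
Variable P : pred int.
Variable r : int.
Hypothesis HP : forall j, P j = (M%:Z %| j - r)%Z.

Definition cnt (A : int) (n : nat) := count P [seq A + i%:Z | i <- iota 1 n].

Lemma cnt_add A n1 n2 : cnt A (n1 + n2) = (cnt A n1 + cnt (A + n1%:Z) n2)%N.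
Proof.
rewrite /cnt iotaD map_cat count_cat; congr (_ + _)%N.
rewrite addnC iotaDl -map_comp; congr count; apply: eq_map => i /=.
by rewrite PoszD addrA.
Qed.

Lemma cnt_shift A n : cnt (A + M%:Z) n = cnt A n.
Proof.
rewrite /cnt !count_map; apply: eq_count => i /=.
rewrite !HP.
have -> : A + M%:Z + i%:Z - r = (A + i%:Z - r) + M%:Z by ring.
by rewrite (rpredDr _ (dvdzz _)).
Qed.

Lemma mem_iota_map (A j : int) n :
  (j \in [seq A + i%:Z | i <- iota 1 n]) = (A + 1 <= j <= A + n%:Z).
Proof.
apply/mapP/idP.
  move=> [i]; rewrite mem_iota => /andP [i1 i2] ->; lia.
move=> /andP [h1 h2]; exists `|j - A|%N.
  rewrite mem_iota; lia.
lia.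
Qed.

Lemma cnt_block A : cnt A M = 1%N.
Proof.
set w := `|((r - A - 1) %% M%:Z)%Z|%N.
have w0 : 0 <= ((r - A - 1) %% M%:Z)%Z by apply: modz_ge0; lia.
have wM : ((r - A - 1) %% M%:Z)%Z < M%:Z.
  by have := ltz_pmod (r - A - 1) (_ : 0 < M%:Z); apply; lia.
have wE : w%:Z = ((r - A - 1) %% M%:Z)%Z by rewrite /w gez0_abs.
rewrite /cnt count_map.
rewrite (@eq_in_count _ _ (pred1 w.+1)); last first.
  move=> i; rewrite mem_iota => /andP [i1 i2] /=; rewrite HP.
  have dv : (M%:Z %| A + w.+1%:Z - r)%Z.
    have -> : A + w.+1%:Z - r = - (((r - A - 1) %/ M%:Z)%Z * M%:Z).
      rewrite -[w.+1]addn1 PoszD wE.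
      have := divz_eq (r - A - 1) M%:Z; lia.
    by rewrite rpredN dvdz_mull.
  apply/idP/eqP.
    move=> h.
    have : (M%:Z %| (A + i%:Z - r) - (A + w.+1%:Z - r))%Z by rewrite rpredB.
    have -> : A + i%:Z - r - (A + w.+1%:Z - r) = i%:Z - w.+1%:Z by ring.
    rewrite dvdzE => hd.
    have : `|i%:Z - w.+1%:Z|%N = 0%N.
      apply/eqP; apply: contraT => hn.
      have := dvdn_leq _ hd; rewrite lt0n hn => /(_ isT); lia.
    lia.
  by move=> ->.
rewrite count_uniq_mem ?iota_uniq // mem_iota; apply/eqP; rewrite eqb1; lia.
Qed.


Lemma cnt_2M A : cnt A (M + M) = 2%N.
Proof. by rewrite cnt_add !cnt_block. Qed.

Variable R : realType.
Variable N : nat.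
Hypothesis N0 : (0 < N)%N.
Variable x : R.

Let NR : (N%:R : R) != 0. Proof. by rewrite pnatr_eq0 -lt0n. Qed.

Definition Ak (k : nat) := Num.floor (M%:R / N%:R * k%:R + x).
Definition Bk (k : nat) := Num.floor (2 * M%:R - M%:R / N%:R * k%:R + x).
Definition fk (k : nat) := cnt (Ak k) `|Bk k - Ak k|%N.

Lemma floor_addz (y : R) (z : int) : Num.floor (y + z%:~R) = Num.floor y + z.
Proof.
apply: floor_def; have /andP [h1 h2] := floor_itv y.
rewrite !intrD in h2 *; apply/andP; split; lra.
Qed.

Lemma AB_le k : (k <= N)%N -> Ak k <= Bk k.
Proof.
move=> kN; rewrite /Ak /Bk; apply: le_floor.
have kR : (k%:R : R) <= N%:R by rewrite ler_nat.
have hM : (0 : R) <= M%:R by [].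
have : M%:R / N%:R * k%:R <= (M%:R : R).
  rewrite mulrAC ler_pdivrMr ?ltr0n //; exact: ler_wpM2l.
lra.
Qed.

Lemma pair_sum k : (0 < k)%N -> (k < N)%N -> (fk k + fk (N - k))%N = 2%N.
Proof.
move=> k0 kN.
set E := Num.floor (x - M%:R / N%:R * k%:R).
have eA' : Ak (N - k) = E + M%:Z.
  rewrite /Ak -floor_addz; congr Num.floor.
  rewrite natrB ?(ltnW kN) // -pmulrn; by field; rewrite ?NR.
have eB : Bk k = E + M%:Z + M%:Z.
  rewrite /Bk -!floor_addz; congr Num.floor.
  rewrite -pmulrn; by field; rewrite ?NR.
have eB' : Bk (N - k) = Ak k + M%:Z.
  rewrite /Bk /Ak -floor_addz; congr Num.floor.
  rewrite natrB ?(ltnW kN) // -pmulrn; by field; rewrite ?NR.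
have hE : E <= Ak k.
  rewrite /E /Ak; apply: le_floor.
  have : (0 : R) <= M%:R / N%:R * k%:R by rewrite mulr_ge0 // divr_ge0.
  lra.
have hA : Ak k <= E + M%:Z + M%:Z by rewrite -eB AB_le // ltnW.
rewrite /fk eA' eB eB'.
have -> : Ak k + M%:Z - (E + M%:Z) = Ak k - E by ring.
rewrite cnt_shift.
set d1 := `|Ak k - E|%N.
set d2 := `|(E + M%:Z + M%:Z - Ak k)%R|%N.
have hd1 : Ak k = E + d1%:Z by rewrite /d1 gez0_abs; lia.
have hd : (d1 + d2)%N = (M + M)%N by rewrite /d1 /d2; lia.
by rewrite addnC hd1 -cnt_add hd cnt_2M.
Qed.

Lemma sum_fk : (\sum_(1 <= k < N) fk k)%N = (N - 1)%N.
Proof.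
have h2 : (2 * \sum_(1 <= k < N) fk k = 2 * (N - 1))%N.
  rewrite mul2n -addnn {2}big_nat_rev /= -big_split /=.
  rewrite (@eq_big_nat _ _ _ 1 N _ (fun _ => 2%N)); last first.
    move=> i /andP [i1 i2].
    have -> : (1 + N - i.+1 = N - i)%N by lia.
    by apply: pair_sum.
  by rewrite sum_nat_const_nat mul2n muln2.
lia.
Qed.


Definition js (k : nat) : seq int :=
  [seq j <- [seq Ak k + i%:Z | i <- iota 1 `|Bk k - Ak k|%N] | P j].

Lemma count_lemma : exists s : seq (nat * int),
  uniq s /\
  (forall c, (c \in s) =
     [&& (1 <= c.1)%N, (c.1 <= N - 1)%N,
         1 + Num.floor (M%:R / N%:R * c.1%:R + x) <= c.2 &
         c.2 <= Num.floor (2 * M%:R - M%:R / N%:R * c.1%:R + x)] && P c.2) /\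
  size s = (N - 1)%N.
Proof.
exists [seq (k, j) | k <- iota 1 (N - 1), j <- js k]; split; [|split].
- apply: allpairs_uniq_dep; first exact: iota_uniq.
    move=> k _; rewrite /js; apply: filter_uniq; rewrite map_inj_uniq ?iota_uniq //.
    by move=> i1 i2 /addrI [].
  by move=> [a1 b1] [a2 b2] _ _ /= [e1 e2]; subst.
- move=> [k j] /=.
  apply/allpairsPdep/idP.
    move=> [k' [j' [hk hj [-> ->]]]].
    move: hk; rewrite mem_iota => /andP [k1 k2].
    move: hj; rewrite /js mem_filter mem_iota_map => /andP [-> /andP [h1 h2]].
    have kN : (k' <= N)%N by lia.
    have hAB := AB_le kN.
    rewrite andbT; apply/and4P; split => //.
      by rewrite -/(Ak k'); lia.
    by rewrite -/(Bk k'); lia.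
  move=> /andP [/and4P [k1 k2 h1 h2] Pj].
  exists k, j; split => //.
    by rewrite mem_iota; lia.
  rewrite /js mem_filter Pj mem_iota_map /=.
  have kN : (k <= N)%N by lia.
  have hAB := AB_le kN.
  move: h1 h2; rewrite -/(Ak k) -/(Bk k) => h1 h2; lia.
- rewrite size_allpairs_dep sumnE big_map.
  rewrite -{2}sum_fk.
  have -> : iota 1 (N - 1) = index_iota 1 N by rewrite /index_iota.
  apply: eq_bigr => k _; by rewrite /js size_filter /fk /cnt.
Qed.

End Count.

Lemma residue (M nz : nat) (l : int) : coprime M nz ->
  exists r : int, forall j : int,
    (j * nz%:Z + l == 0 %[mod M%:Z])%Z = (M%:Z %| j - r)%Z.
Proof.
move=> cop.
case: (Bezoutz nz%:Z M%:Z) => u [v huv].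
have e : u * nz%:Z + v * M%:Z = 1.
  rewrite huv /gcdz /= gcdnC; by move/eqP: cop => ->.
exists (- l * u) => j; rewrite eqz_mod_dvd subr0.
apply/idP/idP => h.
  have -> : j - - l * u = (j * nz%:Z + l) * u + (j * v) * M%:Z.
    transitivity (j * (u * nz%:Z + v * M%:Z) + l * u); first by rewrite e mulr1; ring.
    ring.
  by apply: rpredD; [exact: dvdz_mulr | apply: dvdz_mull; exact: dvdzz].
have -> : j * nz%:Z + l = (j - - l * u) * nz%:Z + (l * v) * M%:Z.
  transitivity (j * nz%:Z + l * (u * nz%:Z + v * M%:Z)); first by rewrite e mulr1.
  ring.
by apply: rpredD; [exact: dvdz_mulr | apply: dvdz_mull; exact: dvdzz].
Qed.

Section Geom.
Variable R : realType.
Variables nx ny nz : nat.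
Hypotheses (nx0 : (0 < nx)%N) (ny0 : (0 < ny)%N) (nz0 : (0 < nz)%N).
Let S := @singular R nx ny nz.

Let nxR : (nx%:R : R) != 0. Proof. by rewrite pnatr_eq0 -lt0n. Qed.
Let nyR : (ny%:R : R) != 0. Proof. by rewrite pnatr_eq0 -lt0n. Qed.
Let nzR : (nz%:R : R) != 0. Proof. by rewrite pnatr_eq0 -lt0n. Qed.

Lemma nonintS (x : R * R) : ~ S x ->
  [/\ nonint (Ud ny nz x), nonint (Uh nx x) & nonint (Uv nx x)].
Proof.
move=> nS; split => l; by case: (notS nx0 ny0 l nS).
Qed.

Lemma Sd (l : int) x : Ud ny nz x = l%:~R -> S x.
Proof. by move=> h; apply/(singularE _ nx0 ny0); exists l; left. Qed.
Lemma Sh (l : int) x : Uh nx x = l%:~R -> S x.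
Proof. by move=> h; apply/(singularE _ nx0 ny0); exists l; right; left. Qed.
Lemma Sv (l : int) x : Uv nx x = l%:~R -> S x.
Proof. by move=> h; apply/(singularE _ nx0 ny0); exists l; right; right. Qed.

Lemma part1_geom (l : int) (p q : R * R) :
  adjacent_across S (diag_line ny nz l) p q ->
  [/\ Num.floor (Uv nx p) = Num.floor (Uv nx q),
      Num.floor (Uh nx p) = Num.floor (Uh nx q),
      (Num.floor (Ud ny nz p) = l - 1 /\ Num.floor (Ud ny nz q) = l) \/
      (Num.floor (Ud ny nz p) = l /\ Num.floor (Ud ny nz q) = l - 1),
      ~ S p & ~ S q].
Proof.
move=> adj; have [nSp [nSq [nsr _]]] := adj.
have [m [Lm [nm side]]] := adj_m adj.
have Udm : Ud ny nz m = l%:~R by apply/(diag_lineE nz ny0).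
have hL : forall x, diag_line ny nz l x -> U (- (nz%:R : R)) ny%:R x = l%:~R.
  by move=> x /(diag_lineE nz ny0).
have hV : forall l' : int, (l'%:~R < Uv nx p) = (l'%:~R < Uv nx q).
  move=> l'; apply: (side (nx%:R : R) 0); first exact: Sv.
  apply: (off_line (al := 0) (be := 1) nm (@Sv l') hL Udm).
    by rewrite !mulr0 mul0r addr0.
  by rewrite mulr0 mulr1 add0r.
have hH : forall l' : int, (l'%:~R < Uh nx p) = (l'%:~R < Uh nx q).
  move=> l'; apply: (side 0 (nx%:R : R)); first exact: Sh.
  apply: (off_line (al := 1) (be := 0) nm (@Sh l') hL Udm).
    by rewrite !mulr0 mul0r addr0.
  by rewrite mulr0 mulr1 addr0 oppr_eq0.
have hD : forall l' : int, l' != l -> (l'%:~R < Ud ny nz p) = (l'%:~R < Ud ny nz q).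
  move=> l' ne; apply: (side (- (nz%:R : R)) ny%:R); first exact: Sd.
  by rewrite -/(Ud ny nz m) Udm eqr_int eq_sym.
have [nup nhp nvp] := nonintS nSp; have [nuq nhq nvq] := nonintS nSq.
split => //.
- exact: same_floor.
- exact: same_floor.
- apply: adj_floor => //.
  have [l'' [H|[H|H]]] := sep nx0 ny0 nSp nSq nsr.
  + case: (eqVneq l'' l) => [<-|ne] //.
    by move: H; rewrite hD // eqxx.
  + by move: H; rewrite hH eqxx.
  + by move: H; rewrite hV eqxx.
Qed.

Lemma part2_geom (l : int) (p q : R * R) :
  adjacent_across S (horiz_line nx l) p q ->
  [/\ Num.floor (Uv nx p) = Num.floor (Uv nx q),
      Num.floor (Ud ny nz p) = Num.floor (Ud ny nz q),
      (Num.floor (Uh nx p) = l - 1 /\ Num.floor (Uh nx q) = l) \/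
      (Num.floor (Uh nx p) = l /\ Num.floor (Uh nx q) = l - 1),
      ~ S p & ~ S q].
Proof.
move=> adj; have [nSp [nSq [nsr _]]] := adj.
have [m [Lm [nm side]]] := adj_m adj.
have Uhm : Uh nx m = l%:~R by apply/(horiz_lineE nx0).
have hL : forall x, horiz_line nx l x -> U (0 : R) nx%:R x = l%:~R.
  by move=> x /(horiz_lineE nx0).
have hV : forall l' : int, (l'%:~R < Uv nx p) = (l'%:~R < Uv nx q).
  move=> l'; apply: (side (nx%:R : R) 0); first exact: Sv.
  apply: (off_line (al := 0) (be := 1) nm (@Sv l') hL Uhm).
    by rewrite !mulr0 mul0r addr0.
  by rewrite mulr0 mulr1 add0r.
have hD : forall l' : int, (l'%:~R < Ud ny nz p) = (l'%:~R < Ud ny nz q).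
  move=> l'; apply: (side (- (nz%:R : R)) ny%:R); first exact: Sd.
  apply: (off_line (al := ny%:R) (be := nz%:R) nm (@Sd l') hL Uhm).
    by rewrite mulNr mulrC addNr.
  by rewrite mul0r add0r mulf_neq0.
have hH : forall l' : int, l' != l -> (l'%:~R < Uh nx p) = (l'%:~R < Uh nx q).
  move=> l' ne; apply: (side 0 (nx%:R : R)); first exact: Sh.
  by rewrite -/(Uh nx m) Uhm eqr_int eq_sym.
have [nup nhp nvp] := nonintS nSp; have [nuq nhq nvq] := nonintS nSq.
split => //.
- exact: same_floor.
- exact: same_floor.
- apply: adj_floor => //.
  have [l'' [H|[H|H]]] := sep nx0 ny0 nSp nSq nsr.
  + by move: H; rewrite hD eqxx.
  + case: (eqVneq l'' l) => [<-|ne] //.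
    by move: H; rewrite hH // eqxx.
  + by move: H; rewrite hV eqxx.
Qed.

End Geom.

Section Final.
Variable R : realType.

Lemma sin_X (n : nat) (a : int) (u : R) : (0 < n)%N -> nonint u ->
  sin ((a%:~R + u) / n%:R * pi) != 0 /\
  (0 < sin ((a%:~R + u) / n%:R * pi)) =
  (2 %| Num.floor ((a%:~R + (Num.floor u)%:~R) / n%:R : R))%Z.
Proof.
move=> n0 nu.
have nX := nonint_shift a n0 nu.
have := sin_floor (x := (a%:~R + u) / n%:R * pi).
rewrite mulfK ?pi_neq0 // => /(_ nX) [h1 h2]; split => //.
by rewrite h2 nested_floor.
Qed.

Lemma sin_flip (n : nat) (a l : int) (up uq sd : R) : (0 < n)%N ->
  nonint up -> nonint uq -> sd != 0 ->
  (Num.floor up = l - 1 /\ Num.floor uq = l) \/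
  (Num.floor up = l /\ Num.floor uq = l - 1) ->
  ((0 < sin ((a%:~R + up) / n%:R * pi) * sd) !=
   (0 < sin ((a%:~R + uq) / n%:R * pi) * sd)) = (n%:Z %| a + l)%Z.
Proof.
move=> n0 nup nuq sd0 hf.
have [p1 p2] := sin_X a n0 nup; have [q1 q2] := sin_X a n0 nuq.
rewrite sign_mul_ne // p2 q2.
have n0' : (0 : int) < n%:Z by lia.
have key : forall Fp Fq : int, Fp = l - 1 -> Fq = l ->
   ((2 %| Num.floor ((a%:~R + Fp%:~R) / n%:R : R))%Z !=
    (2 %| Num.floor ((a%:~R + Fq%:~R) / n%:R : R))%Z) = (n%:Z %| a + l)%Z.
  move=> Fp Fq -> ->.
  rewrite -!intrD.
  have [h1 h2] := @floor_divI R (a + (l - 1)) n n0.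
  have [h3 h4] := @floor_divI R (a + l) n n0.
  apply: int_sep => //; lia.
case: hf => [[-> ->]|[-> ->]]; first exact: key.
by rewrite eq_sym key.
Qed.

Lemma sin_same (n : nat) (a : int) (up uq sd : R) : (0 < n)%N ->
  nonint up -> nonint uq -> sd != 0 -> Num.floor up = Num.floor uq ->
  (0 < sin ((a%:~R + up) / n%:R * pi) * sd) =
  (0 < sin ((a%:~R + uq) / n%:R * pi) * sd).
Proof.
move=> n0 nup nuq sd0 e.
have [p1 p2] := sin_X a n0 nup; have [q1 q2] := sin_X a n0 nuq.
by apply: sign_mul_eq => //; rewrite p2 q2 e.
Qed.

Lemma sd_neq0 (N m k : nat) : (0 < N)%N -> coprime N m -> (0 < k)%N -> (k < N)%N ->
  sin ((m * k)%:R / N%:R * pi : R) != 0.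
Proof.
move=> N0 cop k0 kN.
have := sin_floor (x := (m * k)%:R / N%:R * pi : R).
rewrite mulfK ?pi_neq0 // => /(_ (delta_nonint R N0 cop k0 kN)) [] //.
Qed.

End Final.

Unset Implicit Arguments.

Theorem proposition1 (R : realType) (nx ny nz : nat) :
  (0 < nx)%N -> (0 < ny)%N -> (0 < nz)%N ->
  coprime nx ny -> coprime ny nz -> coprime nx nz ->
  (* (1) adjacent regions separated by a diagonal line *)
  (forall (l : int) (p q : R * R),
     in_torus p -> in_torus q ->
     adjacent_across (singular nx ny nz) (diag_line ny nz l) p q ->
     (forall k j, validI nx ny p.1 k j = validI nx ny q.1 k j) /\
     (forall k j, validI nx ny p.1 k j ->
        (overI nx ny nz p.1 p.2 k j != overI nx ny nz q.1 q.2 k j)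
        = (j * nz%:Z + l == 0 %[mod ny%:Z])%Z) /\
     (forall k j, validII R nx ny k j ->
        overII nx ny nz p.2 k j = overII nx ny nz q.2 k j) /\
     (exists s : seq (nat * int),
        uniq s /\
        (forall c, (c \in s) =
           validI nx ny p.1 c.1 c.2 && (c.2 * nz%:Z + l == 0 %[mod ny%:Z])%Z) /\
        size s = (nx - 1)%N)) /\
  (* (2) adjacent regions separated by a horizontal line *)
  (forall (l : int) (p q : R * R),
     in_torus p -> in_torus q ->
     adjacent_across (singular nx ny nz) (horiz_line nx l) p q ->
     (forall k j, validI nx ny p.1 k j = validI nx ny q.1 k j) /\
     (forall k j, validI nx ny p.1 k j ->
        overI nx ny nz p.1 p.2 k j = overI nx ny nz q.1 q.2 k j) /\
     (forall k j, validII R nx ny k j ->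
        (overII nx ny nz p.2 k j != overII nx ny nz q.2 k j)
        = (j * nz%:Z + l == 0 %[mod nx%:Z])%Z) /\
     (exists s : seq (nat * int),
        uniq s /\
        (forall c, (c \in s) =
           validII R nx ny c.1 c.2 && (c.2 * nz%:Z + l == 0 %[mod nx%:Z])%Z) /\
        size s = (ny - 1)%N)).

Proof.
move=> nx0 ny0 nz0 cxy cyz cxz; split.
- move=> l p q _ _ adj.
  have [eV eH eD nSp nSq] := part1_geom nx0 ny0 nz0 adj.
  have [nup nhp nvp] := nonintS nx0 ny0 nSp.
  have [nuq nhq nvq] := nonintS nx0 ny0 nSq.
  split; [|split; [|split]].
  + by move=> k j; apply: validI_same.
  + move=> k j /and4P [k1 k2 _ _].
    rewrite (overI_E nz nx0 ny0 p) (overI_E nz nx0 ny0 q).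
    rewrite (@sin_flip R _ _ l) //; last first.
      apply: sd_neq0 => //.
      lia.
    by rewrite eqz_mod_dvd subr0 mulrC.
  + move=> k j /and4P [k1 k2 _ _].
    rewrite (overII_E nz nx0 ny0 p) (overII_E nz nx0 ny0 q).
    apply: sin_same => //.
    apply: sd_neq0 => //; lia.
  + have [r HP] := residue l (cyz).
    have [s [us [ms ss]]] := count_lemma ny0 HP nx0 (p.1 / pi).
    by exists s; split => //; split => // c; rewrite ms.
- move=> l p q _ _ adj.
  have [eV eD eH nSp nSq] := part2_geom nx0 ny0 nz0 adj.
  have [nup nhp nvp] := nonintS nx0 ny0 nSp.
  have [nuq nhq nvq] := nonintS nx0 ny0 nSq.
  split; [|split; [|split]].
  + by move=> k j; apply: validI_same.
  + move=> k j /and4P [k1 k2 _ _].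
    rewrite (overI_E nz nx0 ny0 p) (overI_E nz nx0 ny0 q).
    apply: sin_same => //.
    apply: sd_neq0 => //.
    lia.
  + move=> k j /and4P [k1 k2 _ _].
    rewrite (overII_E nz nx0 ny0 p) (overII_E nz nx0 ny0 q).
    rewrite (@sin_flip R _ _ l) //; last first.
      apply: sd_neq0 => //; lia.
    by rewrite eqz_mod_dvd subr0 mulrC.
  + have [r HP] := residue l (cxz).
    have [s [us [ms ss]]] := count_lemma nx0 HP ny0 (0 : R).
    exists s; split => //; split => // c; rewrite ms.
    by rewrite !addr0.
Qed.
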